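(* Suppose $X,Y,Z \in \Omega(\Sigma)$ are three complementary regions meeting at a vertex $v \in V(\Sigma)$, and that the arrows on the edges $X \cap Y$ and $X \cap Z$ arising from the flow $f_\rho$ both point away from $v$. Then either $|x| \le 2$, or $y=z=0$.
   Context: Let $T$ be the one-holed torus with fundamental group $\pi$ free on two generators, and let $\rho:\pi\to \mathrm{SL}(2,\mathbb{C})$ be a representation (character) with $\operatorname{tr}\rho(XYX^{-1}Y^{-1})=\kappa$ for a pair of generators $X,Y$, where $\kappa \neq 2$. Let $\mathscr{C}$ be the set of free homotopy classes of essential simple closed curves on $T$, identified with the vertices of the Farey tessellation of the hyperbolic plane; let $\Sigma$ be the dual infinite trivalent tree, with vertex set $V(\Sigma)$, edge set $E(\Sigma)$, and set of complementary regions $\Omega(\Sigma)$, so that $\Omega(\Sigma)$ is in natural bijection with $\mathscr{C}$, vertices of $\Sigma$ correspond to triples of pairwise adjacent regions (generating triples), and each edge $e$ corresponds to a generating quadruple $(X,Y;Z,Z')$: $e=X\cap Y$ is the common boundary of regions $X,Y$, and $Z,Z'$ are the two regions meeting the two endpoints of $e$. The Fricke trace map $\phi:\Omega(\Sigma)\to\mathbb{C}$ is $\phi(W)=\operatorname{tr}\rho(W)$, and we write $x=\phi(X)$, $y=\phi(Y)$, $z=\phi(Z)$, etc. It satisfies the edge relation $z+z'=xy$ for every generating quadruple $(X,Y;Z,Z')$. The flow $f_\rho$ assigns to each edge $e \leftrightarrow (X,Y;Z,Z')$ the direction pointing from $Z$ towards $Z'$ if $|z|\ge|z'|$ (i.e.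 from the region with larger $|\phi|$ to the one with smaller $|\phi|$; ties are directed arbitrarily). *)

(* Defs.v *)
From HB Require Import structures.
From mathcomp Require Import all_boot all_order all_algebra.
From mathcomp Require Import complex.
From mathcomp Require Import reals.
Set Implicit Arguments. Unset Strict Implicit. Unset Printing Implicit Defensive.
Import Order.TTheory GRing.Theory Num.Theory.
Local Open Scope ring_scope.

(* Letters of the free group F_2 = <a, b> and its (not necessarily reduced) words. *)
Inductive letter := La | Lai | Lb | Lbi.
Definition word := seq letter.

Definition letter_inv (l : letter) : letter :=
  match l with La => Lai | Lai => La | Lb => Lbi | Lbi => Lb end.

Definition winv (w : word) : word := rev (map letter_inv w).

(* Generating pairs (free bases) of F_2: the orbit of (a, b) under the
   elementary Nielsen transformations, which generate Aut(F_2). *)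
Inductive gen_pair : word -> word -> Prop :=
| gp_base : gen_pair [:: La] [:: Lb]
| gp_swap X Y : gen_pair X Y -> gen_pair Y X
| gp_inv X Y : gen_pair X Y -> gen_pair (winv X) Y
| gp_mul X Y : gen_pair X Y -> gen_pair (X ++ Y) Y.

Definition SL2 (R : realType) (M : 'M[R[i]]_2) : Prop := \det M = 1.

Definition rho_letter (R : realType) (A B : 'M[R[i]]_2) (l : letter) : 'M[R[i]]_2 :=
  match l with
  | La => A | Lai => invmx A | Lb => B | Lbi => invmx B
  end.

Definition rho (R : realType) (A B : 'M[R[i]]_2) (w : word) : 'M[R[i]]_2 :=
  foldr (fun l M => rho_letter A B l *m M) 1%:M w.

Definition trw (R : realType) (A B : 'M[R[i]]_2) (w : word) : R[i] :=
  \tr (rho A B w).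

(* The flow on the edge e of a generating quadruple (X,Y;Z,Z'):
   [flow_dir z z' d] says that the boolean [d] ("the arrow on e points from
   Z towards Z'") is an admissible choice of the flow f_rho: it points from the
   region with larger |phi| to the one with smaller |phi|, ties arbitrary. *)
Definition flow_dir (R : realType) (z z' : R[i]) (d : bool) : Prop :=
  (`|z'| < `|z| -> d = true) /\ (`|z| < `|z'| -> d = false).

(* Main.v *)
Require Import Defs.
From HB Require Import structures.
From mathcomp Require Import all_boot all_order all_algebra.
From mathcomp Require Import complex.
From mathcomp Require Import reals.
Import Order.TTheory GRing.Theory Num.Theory.
Local Open Scope ring_scope.
From mathcomp Require Import ring.
Set Implicit Arguments.

Lemma det2 (R : comNzRingType) (A : 'M[R]_2) : \det A = A 0 0 * A 1 1 - A 0 1 * A 1 0.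
Proof.
rewrite (expand_det_row _ ord0) !big_ord_recr big_ord0 /= /cofactor !det_mx11 /= !mxE /=.
rewrite add0r expr0 expr1 mul1r mulN1r mulrN.
by congr (_ * _ - _ * _); congr (A _ _); apply: val_inj.
Qed.
Lemma tr2 (R : comNzRingType) (A : 'M[R]_2) : \tr A = A 0 0 + A 1 1.
Proof. by rewrite /mxtrace !big_ord_recr big_ord0 /= add0r; congr (_ + _); congr (A _ _); apply: val_inj. Qed.
Lemma mul2 (R : comNzRingType) (A B : 'M[R]_2) i j : (A *m B) i j = A i 0 * B 0 j + A i 1 * B 1 j.
Proof. by rewrite mxE !big_ord_recr big_ord0 /= add0r; congr (A i _ * B _ j + A i _ * B _ j); apply: val_inj. Qed.

Lemma ord2P (P : 'I_2 -> Prop) : P 0 -> P 1 -> forall i, P i.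
Proof.
move=> H0 H1 [[|[|k]] Hk] //.
- by rewrite (_ : Ordinal Hk = 0) //; apply: val_inj.
- by rewrite (_ : Ordinal Hk = 1) //; apply: val_inj.
Qed.

Section S.
Variable R : realType.
Variables A B : 'M[R[i]]_2.
Hypothesis hA : \det A = 1.
Hypothesis hB : \det B = 1.

Lemma rho_cat u v : rho A B (u ++ v) = rho A B u *m rho A B v.
Proof. elim: u => [|l u IH] /=; first by rewrite mul1mx. by rewrite IH mulmxA. Qed.

Lemma uA : A \in unitmx. Proof. by rewrite unitmxE hA unitr1. Qed.
Lemma uB : B \in unitmx. Proof. by rewrite unitmxE hB unitr1. Qed.

Lemma letter_invK l : rho_letter A B (letter_inv l) *m rho_letter A B l = 1%:M.
Proof.
case: l => /=; rewrite ?mulVmx ?mulmxV //; try exact: uA; exact: uB.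
Qed.

Lemma rho_winv w : rho A B (winv w) *m rho A B w = 1%:M.
Proof.
elim: w => [|l w IH]; first by rewrite /= mul1mx.
rewrite /winv /= rev_cons -cats1 rho_cat /= mulmx1.
rewrite -mulmxA (mulmxA _ (rho_letter A B l)) letter_invK mul1mx.
exact: IH.
Qed.

Lemma det_rho w : \det (rho A B w) = 1.
Proof.
elim: w => [|l w IH] /=; first by rewrite det1.
rewrite det_mulmx IH mulr1; case: l => /=; rewrite ?det_inv ?hA ?hB ?invr1 //.
Qed.
End S.

Lemma inv_form (R : comNzRingType) (N N' : 'M[R]_2) :
  \det N = 1 -> N' *m N = 1%:M ->
  N' = \matrix_(i, j) (if i == 0 then (if j == 0 then N 1 1 else - N 0 1)
                        else (if j == 0 then - N 1 0 else N 0 0)).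
Proof.
move=> hd hN.
set C := \matrix_(i, j) _.
have NC : N *m C = 1%:M.
  apply/matrixP; apply: ord2P; apply: ord2P; rewrite mul2 !mxE /=;
  move: hd; rewrite det2 => <-; ring.
by rewrite -[N']mulmx1 -NC mulmxA hN mul1mx.
Qed.

Lemma tr_inv (R : comNzRingType) (M N N' : 'M[R]_2) :
  \det N = 1 -> N' *m N = 1%:M ->
  \tr (M *m N') = \tr M * \tr N - \tr (M *m N).
Proof.
move=> hd hN; rewrite (inv_form hd hN) !tr2 !mul2 !mxE /=; ring.
Qed.

Lemma tr_sq (R : comNzRingType) (M N : 'M[R]_2) :
  \det M = 1 -> \tr (M *m (M *m N)) = \tr M * \tr (M *m N) - \tr N.
Proof.
move=> hd; apply/eqP; rewrite -subr_eq0; apply/eqP.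
transitivity ((1 - \det M) * \tr N); last by rewrite hd subrr mul0r.
rewrite det2 !tr2 !mul2; ring.
Qed.

Lemma key (F : numFieldType) (a b c : F) : 0 <= a -> 0 <= b -> 0 <= c -> 2 < a ->
  a * b <= 2 * c -> a * c <= 2 * b -> b = 0 /\ c = 0.
Proof.
move=> a0 b0 c0 a2 h1 h2.
have a0' : 0 < a by apply: lt_trans a2; rewrite ltr0n.
have h3 : a * (a * b) <= 2 * (2 * b).
  apply: (le_trans (ler_wpM2l a0 h1)).
  rewrite mulrCA; apply: ler_wpM2l => //; rewrite ler0n.
have h4 : (a * a - 2 * 2) * b <= 0.
  by rewrite mulrBl subr_le0 -!mulrA.
have h5 : 0 < a * a - 2 * 2.
  by rewrite subr_gt0; apply: ltr_pM => //; rewrite ler0n.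
have hb : b = 0 by apply/le_anti; rewrite b0 andbT -(pmulr_rle0 _ h5).
split => //; apply/le_anti; rewrite c0 andbT -(pmulr_rle0 _ a0').
by move: h2; rewrite hb mulr0.
Qed.

Lemma norm_step (F : numFieldType) (x y z : F) :
  ~ (`|z| < `|x * y - z|) -> `|x| * `|y| <= 2 * `|z|.
Proof.
move=> h.
have h' : `|x * y - z| <= `|z|.
  by rewrite real_leNgt ?normr_real //; apply/negP.
rewrite -normrM -{1}(subrK z (x * y)); apply: (le_trans (ler_normD (x * y - z) z)).
by rewrite mulr_natl mulr2n lerD2r.
Qed.

Unset Implicit Arguments.

Theorem proposition3p3 (R : realType) (A B : 'M[R[i]]_2)
  (hA : SL2 A) (hB : SL2 B)
  (hkappa : \tr (A *m B *m invmx A *m invmx B) != 2)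
  (X Y : word) (hXY : gen_pair X Y)
  (dXY dXZ : bool)
  (hfXY : flow_dir (trw A B (X ++ Y)) (trw A B (X ++ winv Y)) dXY)
  (hfXZ : flow_dir (trw A B Y) (trw A B (X ++ (X ++ Y))) dXZ) :
  dXY = true -> dXZ = true ->
  `|trw A B X| <= 2 \/ (trw A B Y = 0 /\ trw A B (X ++ Y) = 0).
Proof.
move=> d1 d2; subst dXY dXZ.
have e1 : trw A B (X ++ winv Y) = trw A B X * trw A B Y - trw A B (X ++ Y).
  rewrite /trw !rho_cat; apply: tr_inv; first exact: det_rho.
  exact: rho_winv.
have e2 : trw A B (X ++ (X ++ Y)) = trw A B X * trw A B (X ++ Y) - trw A B Y.
  rewrite /trw !rho_cat; apply: tr_sq; exact: det_rho.
case: hfXY => _ h1; case: hfXZ => _ h2.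
rewrite e1 in h1; rewrite e2 in h2.
have n1 : `|trw A B X| * `|trw A B Y| <= 2 * `|trw A B (X ++ Y)|.
  by apply: norm_step => h; have := h1 h.
have n2 : `|trw A B X| * `|trw A B (X ++ Y)| <= 2 * `|trw A B Y|.
  by apply: norm_step => h; have := h2 h.
have [x2|x2] := real_leP (normr_real (trw A B X)) (normr_real 2); first by left; rewrite normr_nat in x2.
right; rewrite normr_nat in x2.
have [hy hz] := @key _ _ _ _ (normr_ge0 _) (normr_ge0 _) (normr_ge0 _) x2 n1 n2.
by split; apply/eqP; rewrite -normr_eq0; apply/eqP.
Qed.
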